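(* In the setting described in the context, suppose the degree marginal of $P$ has positive variance and $\widetilde{\mathrm{E}}[\theta]=\mathrm{E}[\theta]$. Then $x^{friend}(\theta_i,d_i)>x^{soc}(\theta_i,d_i)$ for all $(\theta_i,d_i)\in\Theta\times D$, and moreover $$\widetilde{\mathrm{E}}[x^{friend}(\theta,d)]>\mathrm{E}[x^{friend}(\theta,d)]>\mathrm{E}[x^{soc}(\theta,d)].$$
   Context: Fix an integer $n\ge 2$, parameters $a>0$, $c>0$, $\phi\in\mathbb{R}$, and a compact set $\Theta\subset[0,\infty)$ of types. Let $D=\{1,\dots,n-1\}$. Let $P$ be a probability distribution on $\Theta\times D$, the joint distribution of the type $\theta$ and degree $d$ of a generic potential neighbor, the same for every agent; $\mathrm{E}$ denotes expectation under $P$. The neighbor distribution $\widetilde P$ is defined by $\widetilde P(A\times\{d\})=\frac{d}{\mathrm{E}[d]}P(A\times\{d\})$, with expectation $\widetilde{\mathrm{E}}$, i.e. $\widetilde{\mathrm{E}}[h(\theta,d)]=\mathrm{E}[d\,h(\theta,d)]/\mathrm{E}[d]$. Standing assumptions: $P(\theta>0)>0$ and $c>a\,\widetilde{\mathrm{E}}[d]$. A strategy is a bounded measurable $x:\Theta\times D\to[0,\infty)$, used by all agents. If others use $x$, an agent of type $\theta_i$, degree $d_i$, choosing $y\ge0$ gets in the society-wide game $EU^{soc}(y;\theta_i,d_i;x)=\theta_i y+a y d_i\mathrm{E}[x(\theta,d)]-\frac{c}{2}y^2+\phi(n-1)\mathrm{E}[x(\theta,d)]$, and in the friend game $EU^{friend}(y;\theta_i,d_i;x)=\theta_i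 y+a y d_i\widetilde{\mathrm{E}}[x(\theta,d)]-\frac{c}{2}y^2+\phi(n-1)\mathrm{E}[x(\theta,d)]$. A Bayesian equilibrium of a game is a strategy $x$ such that for every $(\theta_i,d_i)$, $x(\theta_i,d_i)$ maximizes that game's payoff over $y\ge0$ given others use $x$. Under the standing assumptions each game has a unique Bayesian equilibrium; $x^{soc}$ denotes that of the society-wide game and $x^{friend}$ that of the friend game. *)

(* Defs.v *)
From mathcomp Require Import all_boot all_order all_algebra.
From mathcomp Require Import all_classical all_reals all_analysis.
Set Implicit Arguments. Unset Strict Implicit. Unset Printing Implicit Defensive.
Import Order.TTheory GRing.Theory Num.Theory numFieldNormedType.Exports.
Local Open Scope classical_set_scope.
Local Open Scope ring_scope.

Section Defs.
Variable R : realType.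

Definition Dset (n : nat) : set nat := [set d | (1 <= d)%N /\ (d <= n.-1)%N].

(* Expectation E[h] under P (P is concentrated on Theta x D, so we integrate
   over Theta x D; the integrand is h(theta, d) with z = (theta, d)). *)
Definition Exp (P : probability (R * nat)%type R) (Theta : set R) (n : nat)
  (h : R * nat -> R) : R :=
  fine (\int[P]_(z in Theta `*` Dset n) (h z)%:E)%E.

Definition Exptil (P : probability (R * nat)%type R) (Theta : set R) (n : nat)
  (h : R * nat -> R) : R :=
  Exp P Theta n (fun z => (z.2)%:R * h z) / Exp P Theta n (fun z => (z.2)%:R).

Definition is_strategy (Theta : set R) (n : nat) (x : R * nat -> R) : Prop :=
  [/\ measurable_fun (Theta `*` Dset n) x,
      (exists M : R, forall z, (Theta `*` Dset n) z -> `|x z| <= M) &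
      (forall z, (Theta `*` Dset n) z -> 0 <= x z)].

Definition EU_soc (P : probability (R * nat)%type R) (Theta : set R) (n : nat)
  (a c phi : R) (y thi : R) (di : nat) (x : R * nat -> R) : R :=
  thi * y + a * y * di%:R * Exp P Theta n x - c / 2 * y ^+ 2
  + phi * (n.-1)%:R * Exp P Theta n x.

Definition EU_friend (P : probability (R * nat)%type R) (Theta : set R) (n : nat)
  (a c phi : R) (y thi : R) (di : nat) (x : R * nat -> R) : R :=
  thi * y + a * y * di%:R * Exptil P Theta n x - c / 2 * y ^+ 2
  + phi * (n.-1)%:R * Exp P Theta n x.

Definition is_bayes_eq
  (EU : R -> R -> nat -> (R * nat -> R) -> R)
  (Theta : set R) (n : nat) (x : R * nat -> R) : Prop :=
  is_strategy Theta n x /\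
  forall z, (Theta `*` Dset n) z ->
    forall y : R, 0 <= y -> EU y z.1 z.2 x <= EU (x z) z.1 z.2 x.

End Defs.

(* Main.v *)
Require Import Defs.
From mathcomp Require Import all_boot all_order all_algebra.
From mathcomp Require Import all_classical all_reals all_analysis.
From mathcomp Require Import measurable_realfun.
From mathcomp Require Import ring lra.
Import Order.TTheory GRing.Theory Num.Theory numFieldNormedType.Exports.
Local Open Scope classical_set_scope.
Local Open Scope ring_scope.

Section Aux.
Variables (R : realType) (n : nat) (Theta : set R) (P : probability (R * nat)%type R).
Local Notation D := (Theta `*` Dset n).
Hypothesis mD : measurable D.
Hypothesis PD : P D = 1%E.

Definition good (f : R * nat -> R) :=
  measurable_fun D f /\ exists M : R, forall z, D z -> `|f z| <= M.

Lemma good_int f : good f -> P.-integrable D (EFin \o f).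
Proof.
move=> [mf [M hM]]; apply: measurable_bounded_integrable => //.
  exact: (le_lt_trans (probability_le1 P mD) (ltry _)).
rewrite /bounded_near; near=> N => z Dz /=; apply: le_trans (hM z Dz) _.
near: N; apply: nbhs_pinfty_ge; exact: num_real.
Unshelve. all: by end_near. Qed.

Lemma goodD f g : good f -> good g -> good (fun z => f z + g z).
Proof.
move=> [mf [M hM]] [mg [N hN]]; split; first exact: measurable_funD.
exists (M + N) => z Dz; apply: le_trans (ler_normD _ _) _.
exact: lerD (hM z Dz) (hN z Dz).
Qed.

Lemma goodM f g : good f -> good g -> good (fun z => f z * g z).
Proof.
move=> [mf [M hM]] [mg [N hN]]; split; first exact: measurable_funM.
exists (M * N) => z Dz; rewrite normrM; apply: ler_pM => //.
exact: hM. exact: hN.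
Qed.

Lemma good_cst k : good (fun _ => k).
Proof. by split; [exact: measurable_cst| exists `|k|]. Qed.

Lemma good_snd : good (fun z => (z.2)%:R).
Proof.
split.
  apply: measurable_funS (measurableT_comp (f:=fun k : nat => (k%:R : R)) _ (@measurable_snd _ _ _ _)) => //.
exists n%:R => -[t k] [_ [_ /= hk]]; rewrite ger0_norm // ler_nat.
by apply: leq_trans hk (leq_pred _).
Qed.

Lemma good_fst : compact Theta -> good (fun z => z.1).
Proof.
move=> cT; split.
  exact: measurable_funS (@measurable_fst _ _ _ _).
have [M [_ hM]] := compact_bounded cT.
exists (`|M| + 1) => -[t k] [Tt _] /=.
have hlt : M < `|M| + 1 by rewrite (le_lt_trans (ler_norm M)) // ltrDl.
exact: hM _ hlt t Tt.
Qed.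

Lemma ExpD f g : good f -> good g ->
  Exp P Theta n (fun z => f z + g z) = Exp P Theta n f + Exp P Theta n g.
Proof. by move=> gf gg; apply: RintegralD => //; exact: good_int. Qed.

Lemma ExpZ k f : good f -> Exp P Theta n (fun z => k * f z) = k * Exp P Theta n f.
Proof. by move=> gf; apply: RintegralZl => //; exact: good_int. Qed.

Lemma Exp_cst k : Exp P Theta n (fun _ => k) = k.
Proof. rewrite /Exp -/(Rintegral P D _) Rintegral_cst //. have h : fine (P D) = 1 := congr1 fine PD. by rewrite h mulr1. Qed.

Lemma Exp_ext f g : (forall z, D z -> f z = g z) -> Exp P Theta n f = Exp P Theta n g.
Proof. by move=> h; apply: eq_Rintegral => z /set_mem; exact: h. Qed.

Lemma Exp_ge0 f : (forall z, D z -> 0 <= f z) -> 0 <= Exp P Theta n f.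
Proof. by move=> h; apply: Rintegral_ge0. Qed.

Lemma Exp_gt0 f : good f -> (forall z, D z -> 0 <= f z) ->
  (0 < P (D `&` [set z | (0 < f z)%R]))%E -> 0 < Exp P Theta n f.
Proof.
move=> gf f0 Ppos; have gf' := gf; move: gf => [mf _].
rewrite lt_neqAle Exp_ge0 // andbT; apply/eqP => E0.
have fin := integrable_fin_num mD (good_int _ gf').
have I0 : (\int[P]_(z in D) (f z)%:E = 0)%E.
  by rewrite -(fineK fin) (_ : fine _ = 0) //; exact: esym E0.
have : (\int[P]_(z in D) `|(f z)%:E| = 0)%E.
  by rewrite -I0; apply: eq_integral => z /set_mem Dz; rewrite gee0_abs // lee_fin f0.
have mf' : measurable_fun D (EFin \o f) by exact/measurable_EFinP.
move/(ae_eq_integral_abs P mD mf') => -[N [mN PN0 sub]].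
have mS : measurable (D `&` [set z | (0 < f z)%R]).
  have -> : D `&` [set z | (0 < f z)%R] = D `&` f @^-1` `]0, +oo[.
    by apply/seteqP; split => z /= [Dz]; rewrite in_itv /= andbT.
  exact: mf.
suff : P (D `&` [set z | (0 < f z)%R]) = 0%E by move=> h; rewrite h ltxx in Ppos.
apply: (subset_measure0 mS mN _ PN0) => z [Dz fz]; apply: sub => /= h.
by have := h Dz => -[] fz0; move: fz; rewrite /= fz0 ltxx.
Qed.

End Aux.

Lemma best_resp (R : realType) (th a d m c K x : R) : 0 < c -> 0 <= th + a * d * m ->
  (forall y, 0 <= y -> th * y + a * y * d * m - c / 2 * y ^+ 2 + K <=
                       th * x + a * x * d * m - c / 2 * x ^+ 2 + K) ->
  x = (th + a * d * m) / c.
Proof.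
move=> c0 b0 H; set b := th + a * d * m in b0 *.
set y := b / c.
have yc : y * c = b by rewrite /y divfK // gt_eqF.
have y0 : 0 <= y by rewrite /y divr_ge0 // ltW.
have := H y y0.
have e1 : th * y + a * y * d * m = b * y by rewrite /b; ring.
have e2 : th * x + a * x * d * m = b * x by rewrite /b; ring.
rewrite e1 e2 -yc => h.
have : c * (x - y) ^+ 2 <= 0 by nra.
rewrite pmulr_rle0 // => h2.
have : (x - y) ^+ 2 = 0 by apply/eqP; rewrite eq_le h2 sqr_ge0.
by move/eqP; rewrite sqrf_eq0 subr_eq0 => /eqP.
Qed.

Theorem proposition1 (R : realType) (n : nat) (a c phi : R)
  (Theta : set R) (P : probability (R * nat)%type R)
  (xsoc xfriend : R * nat -> R) :
  (2 <= n)%N -> 0 < a -> 0 < c ->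
  compact Theta -> Theta `<=` [set t | 0 <= t] ->
  P (Theta `*` Dset n) = 1%E ->
  (0 < P [set z : R * nat | (0 < z.1)%R])%E ->
  a * Exptil P Theta n (fun z => (z.2)%:R) < c ->
  (* degree marginal has positive variance *)
  0 < Exp P Theta n (fun z => ((z.2)%:R - Exp P Theta n (fun w => (w.2)%:R)) ^+ 2) ->
  Exptil P Theta n (fun z => z.1) = Exp P Theta n (fun z => z.1) ->
  is_bayes_eq (EU_soc P Theta n a c phi) Theta n xsoc ->
  is_bayes_eq (EU_friend P Theta n a c phi) Theta n xfriend ->
  (forall z, (Theta `*` Dset n) z -> xsoc z < xfriend z) /\
  Exptil P Theta n xfriend > Exp P Theta n xfriend /\
  Exp P Theta n xfriend > Exp P Theta n xsoc.
Proof.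
move=> hn ha hc cT Tpos PD Ppos hc' Var Eth [[mxs bxs pxs] eqs] [[mxf bxf pxf] eqf].
have mD : measurable (Theta `*` Dset n).
  apply: measurableX => //.
  apply: closed_measurable; apply: compact_closed => //; exact: norm_hausdorff.
have ED := ExpD _ _ _ P mD; have EZ := ExpZ _ _ _ P mD; have EC := Exp_cst _ _ _ _ mD PD.
have gth := good_fst _ n _ cT; have gd := good_snd R n Theta.
have gxs : good R n Theta xsoc by split.
have gxf : good R n Theta xfriend by split.
set Ed := Exp P Theta n (fun z => (z.2)%:R).
set Ed2 := Exp P Theta n (fun z => (z.2)%:R * (z.2)%:R).
set Et := Exp P Theta n (fun z => z.1).
have Ed1 : 1 <= Ed.
  have : 0 <= Exp P Theta n (fun z => (z.2)%:R + (-1)).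
    apply: Exp_ge0 => -[t k] [_ [hk _]] /=; rewrite subr_ge0 ler1n //.
  by rewrite ED ?EC //; [rewrite subr_ge0 | exact: good_cst].
have gdd : good R n Theta (fun z => (z.2)%:R * (z.2)%:R) by exact: goodM.
have gdt : good R n Theta (fun z => (z.2)%:R * z.1) by exact: goodM.
have gc k : good R n Theta (fun _ => k) by exact: good_cst.
have VarE : Ed ^+ 2 < Ed2.
  move: Var; rewrite (@Exp_ext _ _ _ P _ (fun z => (z.2%:R * z.2%:R + (-2 * Ed) * z.2%:R) + Ed ^+ 2)).
    rewrite ED ?EC; last 2 first.
    - by apply: goodD => //; apply: goodM.
    - exact: gc.
    rewrite ED ?EZ // -/Ed2; last by apply: goodM.
    rewrite -/Ed => h; lra.
  by move=> z _; rewrite /Ed; ring.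
have Etpos : 0 < Et.
  apply: Exp_gt0 => //.
  - by move=> -[t k] [Tt _]; exact: Tpos.
  - have mS : measurable [set z : R * nat | (0 < z.1)%R].
      have := @measurable_fst _ _ R nat measurableT `]0, +oo[%classic (measurable_itv _).
      rewrite setTI; congr measurable.
      by apply/seteqP; split=> z /=; rewrite in_itv /= andbT.
    have hC : P (~` (Theta `*` Dset n)) = 0%E.
      rewrite probability_setC // [X in (_ - X)%E](_ : _ = 1%E) ?subee //; exact: PD.
    have : (P [set z : R * nat | (0 < z.1)%R] <=
            P ((Theta `*` Dset n) `&` [set z | (0 < z.1)%R]) + P (~` (Theta `*` Dset n)))%E.
      apply: le_trans (measureU2 _ _ _); last 2 first.
      + exact: measurableI.
      + exact: measurableC.
      rewrite le_measure ?inE //. all: try (by apply: measurableU; [exact: measurableI | exact: measurableC]).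
      move=> z Sz; have [Dz|nDz] := pselect ((Theta `*` Dset n) z); [left|right] => //.
    rewrite hC adde0 => h; exact: lt_le_trans Ppos h.
have Edpos : 0 < Ed by lra.
set m := Exp P Theta n xsoc.
have gdx : good R n Theta (fun z => (z.2)%:R * xfriend z) by exact: goodM.
set Edx := Exp P Theta n (fun z => (z.2)%:R * xfriend z).
set Edt := Exp P Theta n (fun z => (z.2)%:R * z.1).
set t := Exptil P Theta n xfriend.
have tdef : t = Edx / Ed by [].
have m0 : 0 <= m by apply: Exp_ge0.
have t0 : 0 <= t.
  rewrite tdef divr_ge0 ?(ltW Edpos) //; apply: Exp_ge0 => z Dz.
  by apply: mulr_ge0 => //; exact: pxf.
have dpos z : (Theta `*` Dset n) z -> 0 < (z.2)%:R :> R.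
  by case: z => [th k] [_ [hk _]] /=; rewrite ltr0n.
have th0 z : (Theta `*` Dset n) z -> 0 <= z.1.
  by case: z => [th k] [Tt _]; exact: Tpos.
have xsE z : (Theta `*` Dset n) z -> xsoc z = (z.1 + a * (z.2)%:R * m) / c.
  move=> Dz; apply: (@best_resp R _ _ _ _ _ (phi * (n.-1)%:R * m)) => //.
    by apply: addr_ge0; [exact: th0 | apply: mulr_ge0; [apply: mulr_ge0; [exact: ltW | exact: ltW (dpos _ Dz)] | exact: m0]].
  by move=> y y0; have := eqs z Dz y y0; rewrite /EU_soc.
have xfE z : (Theta `*` Dset n) z -> xfriend z = (z.1 + a * (z.2)%:R * t) / c.
  move=> Dz; apply: (@best_resp R _ _ _ _ _ (phi * (n.-1)%:R * Exp P Theta n xfriend)) => //.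
    by apply: addr_ge0; [exact: th0 | apply: mulr_ge0; [apply: mulr_ge0; [exact: ltW | exact: ltW (dpos _ Dz)] | exact: t0]].
  by move=> y y0; have := eqf z Dz y y0; rewrite /EU_friend.
have mE : m = c^-1 * Et + (c^-1 * a * m) * Ed.
  rewrite {1}/m (@Exp_ext _ _ _ P _ (fun z => c^-1 * z.1 + (c^-1 * a * m) * (z.2)%:R)).
    by rewrite ED ?EZ //; apply: goodM.
  by move=> z Dz; rewrite xsE //; rewrite mulrC; ring.
set Exf := Exp P Theta n xfriend.
have xE : Exf = c^-1 * Et + (c^-1 * a * t) * Ed.
  rewrite {1}/Exf (@Exp_ext _ _ _ P _ (fun z => c^-1 * z.1 + (c^-1 * a * t) * (z.2)%:R)).
    by rewrite ED ?EZ //; apply: goodM.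
  by move=> z Dz; rewrite xfE //; rewrite mulrC; ring.
have EdxE : Edx = c^-1 * Edt + (c^-1 * a * t) * Ed2.
  rewrite {1}/Edx (@Exp_ext _ _ _ P _ (fun z => c^-1 * ((z.2)%:R * z.1) + (c^-1 * a * t) * ((z.2)%:R * (z.2)%:R))).
    by rewrite ED ?EZ //; apply: goodM.
  by move=> z Dz; rewrite xfE //; rewrite mulrC; ring.
have EthE : Edt = Et * Ed.
  move: Eth; rewrite /Exptil -/Edt -/Ed -/Et => <-.
  by rewrite divfK // gt_eqF.
have hcT : a * (Ed2 / Ed) < c by exact: hc'.
set T := Ed2 / Ed in hcT.
have Ed2E : Ed2 = T * Ed by rewrite /T divfK // gt_eqF.
have cc : c * c^-1 = 1 by rewrite divff // gt_eqF.
have ET : Ed < T.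
  by move: VarE; rewrite Ed2E expr2 => h; rewrite -(ltr_pM2r Edpos).
have tEd : t * Ed = Edx by rewrite tdef divfK // gt_eqF.
have ht : t * c = Et + a * t * T.
  have h2 : t * c * Ed = (Et + a * t * T) * Ed.
    rewrite -mulrA (mulrC c) mulrA tEd EdxE EthE Ed2E.
    by field; rewrite gt_eqF.
  by apply: (mulIf _ h2); rewrite gt_eqF.
have hm : m * c = Et + a * m * Ed by rewrite {1}mE; field; rewrite gt_eqF.
have hx : Exf * c = Et + a * t * Ed by rewrite xE; field; rewrite gt_eqF.
have e1 : t * (c - a * T) = Et by rewrite mulrBr; lra.
have e2 : m * (c - a * Ed) = Et by rewrite mulrBr; lra.
have tpos : 0 < t.
  rewrite lt_neqAle t0 andbT; apply/eqP => t00; rewrite -t00 mul0r in e1; lra.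
have aET : a * Ed < a * T by rewrite ltr_pM2l.
have mt : m < t by nra.
split; last split.
- move=> z Dz; rewrite xsE // xfE //; rewrite ltr_pM2r ?invr_gt0 // ltrD2l.
  by rewrite ltr_pM2l // mulr_gt0 // dpos.
- have h3 : (t - Exf) * c = t * (a * T - a * Ed) by rewrite mulrBl; lra.
  have : 0 < (t - Exf) * c by rewrite h3 mulr_gt0 // subr_gt0.
  by rewrite pmulr_lgt0 // subr_gt0.
- have h3 : (Exf - m) * c = (a * Ed) * (t - m) by rewrite mulrBl; lra.
  have : 0 < (Exf - m) * c by rewrite h3 mulr_gt0 ?mulr_gt0 // subr_gt0.
  by rewrite pmulr_lgt0 // subr_gt0.
Qed.
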